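(* Let $(X,\|\cdot\|)$ be a strictly convex two-dimensional real normed space with closed unit ball $B_X$ and unit sphere $S_X$. Fix a basis $\{e_1,e_2\}$ of $X$ and write $(s,t)=se_1+te_2$. Let $\alpha>0$ be such that $(\alpha,1),(\alpha,-1)\in S_X$, and let $\delta>0$ be such that $(0,\delta)\in S_X$. Then $$B_X\cap\bigl(]\alpha,\infty[\times\mathbb R\bigr)\subset(\alpha,0)+\delta^{-1}\operatorname{int}(B_X)$$ and $$\bigl((\alpha,0)+\delta^{-1}B_X\bigr)\cap\bigl(]-\infty,\alpha[\times\mathbb R\bigr)\subset\operatorname{int}(B_X),$$ where $I\times\mathbb R$ denotes $\{(s,t):s\in I,\ t\in\mathbb R\}$.
   Context: A norm is strictly convex if the unit sphere contains no nondegenerate line segment. $\operatorname{int}$ denotes the interior, $]a,b[$ an open interval. *)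

(* Defs.v *)
From HB Require Import structures.
From mathcomp Require Import all_boot all_order all_algebra.
From mathcomp Require Import all_classical all_reals all_analysis.
Set Implicit Arguments. Unset Strict Implicit. Unset Printing Implicit Defensive.
Import Order.TTheory GRing.Theory Num.Theory.
Import numFieldNormedType.Exports.
Local Open Scope classical_set_scope.
Local Open Scope ring_scope.

Definition unit_ball (R : realType) (V : normedModType R) : set V :=
  [set x | `|x| <= 1].

Definition strictly_convex_norm (R : realType) (V : normedModType R) : Prop :=
  forall x y : V, x != y -> `|x| = 1 -> `|y| = 1 ->
    ~ (forall l : R, 0 <= l <= 1 -> `|(1 - l) *: x + l *: y| = 1).

Definition is_basis2 (R : realType) (V : normedModType R) (e1 e2 : V) : Prop :=
  (forall v : V, exists s t : R, v = s *: e1 + t *: e2) /\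
  (forall s t : R, s *: e1 + t *: e2 = 0 -> s = 0 /\ t = 0).

(* Main.v *)
Require Import Defs.
From HB Require Import structures.
From mathcomp Require Import all_boot all_order all_algebra.
From mathcomp Require Import all_classical all_reals all_analysis.
From mathcomp Require Import ring lra.
Import Order.TTheory GRing.Theory Num.Theory.
Import numFieldNormedType.Exports.
Local Open Scope classical_set_scope.
Local Open Scope ring_scope.

Section H.
Variables (R : realType) (V : normedModType R).

Lemma tri2 (a b : R) (u w : V) : 0 <= a -> 0 <= b ->
  `|a *: u + b *: w| <= a * `|u| + b * `|w|.
Proof.
move=> a0 b0; apply: le_trans (ler_normD _ _) _.
by rewrite !normrZ !ger0_norm.
Qed.

Lemma combE (x y : V) a b c :
  c *: (a *: x + b *: y) + (1 - c) *: y = (c * a) *: x + (c * b + (1 - c)) *: y.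
Proof. by rewrite scalerDr !scalerA -addrA -scalerDl. Qed.

Lemma combE' (x y : V) a b c :
  c *: (a *: x + b *: y) + (1 - c) *: x = (c * a + (1 - c)) *: x + (c * b) *: y.
Proof. by rewrite scalerDr !scalerA addrAC -scalerDl. Qed.

Lemma scl : strictly_convex_norm V -> forall x y : V, `|x| <= 1 -> `|y| <= 1 ->
  x != y -> forall l : R, 0 < l < 1 -> `|(1 - l) *: x + l *: y| < 1.
Proof.
move=> SC x y hx hy xy l /andP[l0 l1].
have tri : forall m : R, 0 <= m <= 1 ->
    `|(1 - m) *: x + m *: y| <= (1 - m) * `|x| + m * `|y|.
  by move=> m /andP[m0 m1]; apply: tri2 => //; rewrite subr_ge0.
have le1 : forall m : R, 0 <= m <= 1 -> `|(1 - m) *: x + m *: y| <= 1.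
  move=> m /andP[m0 m1]; apply: le_trans (tri m _) _; first by rewrite m0 m1.
  have : (1 - m) * `|x| <= (1 - m) by rewrite ler_piMr // subr_ge0.
  have : m * `|y| <= m by rewrite ler_piMr.
  lra.
rewrite ltNge; apply/negP => h1.
have hx1 : `|x| = 1.
  apply/eqP; rewrite eq_le hx /= leNgt; apply/negP => hxl.
  have := tri l; rewrite (ltW l0) (ltW l1) => /(_ isT) h2.
  have : (1 - l) * `|x| < (1 - l) by nra.
  have : l * `|y| <= l by nra.
  lra.
have hy1 : `|y| = 1.
  apply/eqP; rewrite eq_le hy /= leNgt; apply/negP => hyl.
  have := tri l; rewrite (ltW l0) (ltW l1) => /(_ isT) h2.
  have : (1 - l) * `|x| <= (1 - l) by nra.
  have : l * `|y| < l by nra.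
  lra.
apply: (SC x y xy hx1 hy1) => m hm.
apply/eqP; rewrite eq_le le1 //=.
move: hm => /andP[m0 m1].
have hz := le1 m; rewrite m0 m1 in hz; have {}hz := hz isT.
case: (lerP m l) => hml.
- pose t := (1 - l) / (1 - m).
  have m1' : 1 - m != 0 by apply: lt0r_neq0; lra.
  have t0 : 0 < t by rewrite /t divr_gt0 // subr_gt0 //; lra.
  have t1 : t <= 1 by rewrite /t ler_pdivrMr ?subr_gt0; lra.
  have E : (1 - l) *: x + l *: y = t *: ((1 - m) *: x + m *: y) + (1 - t) *: y.
    rewrite combE; congr (_ *: _ + _ *: _); rewrite /t; field; exact: m1'.
  have := @tri2 t (1 - t) ((1 - m) *: x + m *: y) y (ltW t0) (_ : 0 <= 1 - t).
  rewrite -E hy1 mulr1 => /(_ ltac:(lra)) h3.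
  have : t * 1 <= t * `|(1 - m) *: x + m *: y|.
    rewrite mulr1; move: h1 h3; lra.
  by rewrite ler_pM2l.
- pose t := l / m.
  have m0' : m != 0 by apply: lt0r_neq0; lra.
  have t0 : 0 < t by rewrite /t divr_gt0 //; lra.
  have t1 : t <= 1 by rewrite /t ler_pdivrMr; lra.
  have E : (1 - l) *: x + l *: y = t *: ((1 - m) *: x + m *: y) + (1 - t) *: x.
    rewrite combE'; congr (_ *: _ + _ *: _); rewrite /t; field; exact: m0'.
  have := @tri2 t (1 - t) ((1 - m) *: x + m *: y) x (ltW t0) (_ : 0 <= 1 - t).
  rewrite -E hx1 mulr1 => /(_ ltac:(lra)) h3.
  have : t * 1 <= t * `|(1 - m) *: x + m *: y|.
    rewrite mulr1; move: h1 h3; lra.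
  by rewrite ler_pM2l.
Qed.

Lemma int_ball (y : V) : `|y| < 1 -> interior (@unit_ball R V) y.
Proof.
move=> hy.
have -> : @unit_ball R V = closed_ball 0 1.
  rewrite closed_ballE //; apply/funext => z /=; rewrite /closed_ball_ /= sub0r normrN //.
rewrite interior_closed_ballE // -ball_normE /ball_ /= sub0r normrN //.
Qed.

Variables (e1 e2 : V) (al de : R).
Definition v (s t : R) : V := s *: e1 + t *: e2.

Hypotheses (SC : strictly_convex_norm V) (B : is_basis2 e1 e2) (al0 : 0 < al)
  (hA : `|v al 1| = 1) (hA' : `|v al (-1)| = 1) (de0 : 0 < de) (hD : `|v 0 de| = 1).

Lemma vD s t s' t' : v s t + v s' t' = v (s + s') (t + t').
Proof. by rewrite /v addrACA -!scalerDl. Qed.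

Lemma vZ k s t : k *: v s t = v (k * s) (k * t).
Proof. by rewrite /v scalerDr !scalerA. Qed.

Lemma vinj s t s' t' : v s t = v s' t' -> s = s' /\ t = t'.
Proof.
move=> E; have : (s - s') *: e1 + (t - t') *: e2 = 0.
  by rewrite !scalerBl addrACA -opprD -/(v s t) -/(v s' t') E subrr.
move/(proj2 B) => [/eqP h1 /eqP h2]; move: h1 h2; rewrite !subr_eq0 => /eqP -> /eqP ->.
by [].
Qed.

Definition c := `|e2|.

Lemma norm0t t : `|v 0 t| = `|t| * c.
Proof. by rewrite /v scale0r add0r normrZ. Qed.

Lemma dec : de * c = 1.
Proof. by move: hD; rewrite norm0t gtr0_norm. Qed.

Lemma c0 : 0 < c.
Proof. have := dec; rewrite /c => h; rewrite lt_neqAle normr_ge0 andbT; apply/eqP => E.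
by move: h; rewrite -E mulr0 => /eqP; rewrite eq_sym oner_eq0. Qed.

Lemma Ftau tau : `|tau| <= 1 -> `|v al tau| <= 1.
Proof.
rewrite ler_norml => /andP[h1 h2].
pose l := (1 + tau) / 2.
have -> : v al tau = (1 - l) *: v al (-1) + l *: v al 1.
  by rewrite !vZ vD /l; congr v; field.
have l0 : 0 <= l by rewrite /l; lra.
have l1 : 0 <= 1 - l by rewrite /l; lra.
have := @tri2 (1 - l) l (v al (-1)) (v al 1) l1 l0; rewrite hA hA' => H; apply: le_trans H _; lra.
Qed.

Lemma c1 : c < 1.
Proof.
have E : v 0 1 = (1 - 2^-1) *: v (- al) 1 + 2^-1 *: v al 1.
  by rewrite !vZ vD; congr v; field.
have := @scl SC (v (- al) 1) (v al 1) _ _ _ (2^-1) _.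
rewrite -E norm0t normr1 mul1r; clear E; apply.
- have -> : v (- al) 1 = - v al (-1).
    by rewrite -[- v al (-1)]scaleN1r vZ; congr v; ring.
  by rewrite normrN hA'.
- by rewrite hA.
- apply/eqP => /vinj [h _]; move: h al0; lra.
- lra.
Qed.

Lemma L1 tau : `|v al tau| < 1 -> -1 < tau < 1.
Proof.
move=> h; have h0 := Ftau 0; rewrite normr0 ler01 in h0; have {}h0 := h0 isT.
apply/andP; split; rewrite ltNge; apply/negP => ht.
- pose l := - tau^-1.
  have tn : tau != 0 by apply/eqP => E; move: ht; rewrite E; lra.
  have E : v al (-1) = (1 - l) *: v al 0 + l *: v al tau.
    by rewrite !vZ vD /l; congr v; field.
  have l0 : 0 < l by rewrite /l oppr_gt0 invr_lt0; lra.
  have l1 : l <= 1.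
    rewrite /l -invrN invf_le1; lra.
  have := @tri2 (1 - l) l (v al 0) (v al tau) (_ : 0 <= 1 - l) (ltW l0).
  rewrite -E hA' => /(_ ltac:(lra)) H.
  have : (1 - l) * `|v al 0| <= 1 - l by nra.
  have : l * `|v al tau| < l by nra.
  lra.
- pose l := tau^-1.
  have tn : tau != 0 by apply/eqP => E; move: ht; rewrite E; lra.
  have E : v al 1 = (1 - l) *: v al 0 + l *: v al tau.
    by rewrite !vZ vD /l; congr v; field.
  have l0 : 0 < l by rewrite /l invr_gt0; lra.
  have l1 : l <= 1 by rewrite /l invf_le1; lra.
  have := @tri2 (1 - l) l (v al 0) (v al tau) (_ : 0 <= 1 - l) (ltW l0).
  rewrite -E hA => /(_ ltac:(lra)) H.
  have : (1 - l) * `|v al 0| <= 1 - l by nra.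
  have : l * `|v al tau| < l by nra.
  lra.
Qed.


Lemma part1 s t : `|v s t| <= 1 -> al < s -> de * `|v (s - al) t| < 1.
Proof.
move=> hP hs; have a0 := al0; have d0 := de0.
have s0 : 0 < s by move: (al0) hs; lra.
have sn : s != 0 by apply: lt0r_neq0.
pose u := t * al / s; pose w := (s - al) / s.
have w0 : 0 < w by rewrite /w divr_gt0 //; lra.
have w1 : w < 1 by rewrite /w ltr_pdivrMr //; lra.
have hw : 0 < w < 1 by rewrite w0 w1.
have hDle : `|v 0 de| <= 1 by rewrite hD.
have hD' : `|v 0 (- de)| <= 1 by rewrite norm0t normrN gtr0_norm // dec.
have Pn : v s t != v 0 de by apply/eqP => /vinj [h _]; move: h s0; lra.
have Pn' : v s t != v 0 (- de) by apply/eqP => /vinj [h _]; move: h s0; lra.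
have E1 : (1 - w) *: v s t + w *: v 0 de = v al (u + w * de).
  by rewrite !vZ vD /u /w; congr v; field.
have E2 : (1 - w) *: v s t + w *: v 0 (- de) = v al (u - w * de).
  by rewrite !vZ vD /u /w; congr v; field.
have := @scl SC _ _ hP hDle Pn _ hw; rewrite E1 => /L1 /andP[_ h1].
have := @scl SC _ _ hP hD' Pn' _ hw; rewrite E2 => /L1 /andP[h2 _].
have E3 : v (s - al) t = v 0 u + w *: v s t.
  by rewrite vZ vD /u /w; congr v; field.
have N1 : `|v (s - al) t| <= `|u| * c + w.
  rewrite E3; apply: le_trans (ler_normD _ _) _; rewrite norm0t [`|w *: _|]normrZ (gtr0_norm w0).
  by rewrite lerD2l; apply: ler_piMr; [exact: ltW | exact: hP].
have hc := dec.
have : de * (`|u| * c + w) = `|u| + de * w by rewrite mulrDr mulrCA hc mulr1.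
have : de * `|v (s - al) t| <= de * (`|u| * c + w) by rewrite ler_pM2l // N1.
case: (lerP 0 u) => hu; [rewrite ger0_norm // | rewrite ltr0_norm //]; nra.
Qed.


Lemma part2 p q : `|v p q| <= 1 -> p < 0 -> `|v (al + de^-1 * p) (de^-1 * q)| < 1.
Proof.
move=> hy hp; have a0 := al0; have d0 := de0.
have hcinv : de^-1 = c by rewrite -[LHS]mulr1 -dec mulKf // gt_eqF.
rewrite hcinv.
have cp := c0; have cl := c1.
move: hy hp; have -> : p = - (- p) by rewrite opprK.
move: (- p) => pp hy hp; have pp0 : 0 < pp by move: hp; lra.
pose r := `|q|.
have hqr : - r <= q <= r by rewrite -ler_norml.
have r0 : 0 <= r by rewrite /r normr_ge0.
have hw : `|v (r * al) q| = r.
  case: (lerP 0 q) => hq.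
  - have -> : v (r * al) q = q *: v al 1 by rewrite vZ /r ger0_norm //; congr v; ring.
    by rewrite normrZ hA mulr1.
  - have -> : v (r * al) q = (- q) *: v al (-1) by rewrite vZ /r ltr0_norm //; congr v; ring.
    by rewrite normrZ normrN hA' mulr1.
have E : (r * al + pp) *: v 0 q = (r * al) *: v (- pp) q + pp *: v (r * al) q.
  by rewrite !vZ vD; congr v; ring.
have N1 : (r * al + pp) * (r * c) <= r * al + pp * r.
  have := @tri2 (r * al) pp (v (- pp) q) (v (r * al) q) (mulr_ge0 r0 (ltW a0)) (ltW pp0).
  rewrite -E hw normrZ norm0t ger0_norm; last by apply: addr_ge0 => //; [exact: mulr_ge0 r0 (ltW a0) | exact: ltW].
  move=> H; apply: le_trans H _; rewrite lerD2r; apply: ler_piMr => //; exact: mulr_ge0 r0 (ltW a0).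
have H : c * (r * al + pp) <= al + pp.
  have [->|rp] := eqVneq r 0.
    rewrite mul0r add0r; nra.
  have rp' : 0 < r by rewrite lt_neqAle eq_sym rp r0.
  rewrite -(ler_pM2l rp'); nra.
pose kap := c * pp / (al + pp).
pose tau := q * c * al / (al + (1 - c) * pp).
have apn : al + pp != 0 by apply: lt0r_neq0; lra.
have acn : al + (1 - c) * pp != 0 by apply: lt0r_neq0; nra.
have acp : 0 < al + (1 - c) * pp by nra.
have ht : `|tau| <= 1.
  have hca : 0 < c * al by exact: mulr_gt0.
  move: hqr => /andP[hq1 hq2].
  have X1 : q * (c * al) <= r * (c * al) by rewrite ler_pM2r.
  have X2 : - r * (c * al) <= q * (c * al) by rewrite ler_pM2r.
  have X3 : c * (r * al + pp) = r * (c * al) + c * pp by ring.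
  rewrite ler_norml /tau; apply/andP; split.
  - rewrite ler_pdivlMr //; nra.
  - rewrite ler_pdivrMr //; nra.
have hk : 0 < kap < 1.
  apply/andP; split.
  - by rewrite /kap divr_gt0 ?mulr_gt0 //; lra.
  - by rewrite /kap ltr_pdivrMr; nra.
have Hn : v al tau != v (- pp) q by apply/eqP => /vinj [h _]; move: h; lra.
have := @scl SC _ _ (@Ftau _ ht) hy Hn _ hk.
have -> : (1 - kap) *: v al tau + kap *: v (- pp) q = v (al + c * - pp) (c * q).
  by rewrite !vZ vD /kap /tau; congr v; field; rewrite ?apn ?acn.
by [].
Qed.

End H.

Theorem proposition2p6 (R : realType) (V : normedModType R) (e1 e2 : V)
  (alpha delta : R) :
  @strictly_convex_norm R V ->
  is_basis2 e1 e2 ->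
  0 < alpha ->
  `|alpha *: e1 + 1 *: e2| = 1 ->
  `|alpha *: e1 + (-1) *: e2| = 1 ->
  0 < delta ->
  `|0 *: e1 + delta *: e2| = 1 ->
  (forall s t : R, @unit_ball R V (s *: e1 + t *: e2) -> alpha < s ->
     exists2 y : V, interior (@unit_ball R V) y &
       s *: e1 + t *: e2 = alpha *: e1 + delta^-1 *: y) /\
  (forall (y : V) (s t : R), @unit_ball R V y ->
     alpha *: e1 + delta^-1 *: y = s *: e1 + t *: e2 -> s < alpha ->
     interior (@unit_ball R V) (alpha *: e1 + delta^-1 *: y)).
Proof.
move=> SC B a0 hA hA' d0 hD.
have P1 := @part1 R V e1 e2 alpha delta SC B a0 hA hA' d0 hD.
have P2 := @part2 R V e1 e2 alpha delta SC B a0 hA hA' d0 hD.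
split.
- move=> s t hP hs; exists (delta *: v R V e1 e2 (s - alpha) t).
  + apply: int_ball; rewrite normrZ gtr0_norm //; exact: P1 s t hP hs.
  + rewrite scalerA mulVf ?gt_eqF // scale1r /v addrA -scalerDl.
    by congr (_ *: _ + _); ring.
- move=> y s t hy E hs.
  have [p [q Ey]] := (proj1 B) y; subst y.
  have EE : alpha *: e1 + delta^-1 *: v R V e1 e2 p q
      = v R V e1 e2 (alpha + delta^-1 * p) (delta^-1 * q).
    by rewrite vZ /v addrA -scalerDl.
  move: E; rewrite -/(v R V e1 e2 p q) EE -/(v R V e1 e2 s t) => /(@vinj R V e1 e2 B) [hs' _].
  apply: int_ball; apply: P2 => //.
  have : delta^-1 * p < 0 by move: hs; rewrite -hs'; lra.
  by rewrite pmulr_rlt0 // invr_gt0.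
Qed.
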